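(* Let $(X,d)$ be a purely $n$-unrectifiable compact metric space with $\mathcal{H}^n(X)<\infty$. Then for any $\epsilon>0$ there exist $m\in\mathbb{N}$ and a $(2\sqrt{n}+1)$-Lipschitz function $\sigma\colon X\to\ell_\infty^m$ such that $\mathcal{H}^n(\sigma(X))<\infty$ and, for all $x,y\in X$, $|d(x,y)-\|\sigma(x)-\sigma(y)\|_\infty|<\epsilon$.
   Context: $\ell_\infty^m$ is $\mathbb{R}^m$ with the maximum norm $\|\cdot\|_\infty$. $\mathcal{H}^n$ is $n$-dimensional Hausdorff measure. A Borel $E\subset X$ is $n$-rectifiable if there are countably many $A_i\subset\mathbb{R}^n$ and Lipschitz $f_i\colon A_i\to X$ with $\mathcal{H}^n(E\setminus\bigcup_i f_i(A_i))=0$; $X$ is purely $n$-unrectifiable if $\mathcal{H}^n(E)=0$ for every $n$-rectifiable $E\subset X$. *)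

(* Defs.v *)
From HB Require Import structures.
From mathcomp Require Import all_boot all_order all_algebra.
From mathcomp Require Import all_classical all_reals all_analysis.
Set Implicit Arguments. Unset Strict Implicit. Unset Printing Implicit Defensive.
Import Order.TTheory GRing.Theory Num.Theory.
Local Open Scope classical_set_scope.
Local Open Scope ring_scope.

Section MetricDefs.
Variable R : realType.

Definition is_metric (T : Type) (d : T -> T -> R) : Prop :=
  [/\ (forall x y, 0 <= d x y),
      (forall x y, d x y = 0 <-> x = y),
      (forall x y, d x y = d y x) &
      (forall x y z, d x z <= d x y + d y z)].

Definition mball (T : Type) (d : T -> T -> R) (x : T) (r : R) : set T :=
  [set y | d x y < r].

Definition mopen (T : Type) (d : T -> T -> R) (A : set T) : Prop :=
  forall x, A x -> exists2 r : R, 0 < r & mball d x r `<=` A.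

Definition mcompact (T : Type) (d : T -> T -> R) : Prop :=
  forall (I : Type) (U : I -> set T), (forall i, mopen d (U i)) ->
    setT `<=` \bigcup_i U i ->
    exists2 F : set I, finite_set F & setT `<=` \bigcup_(i in F) U i.

Definition mborel (T : Type) (d : T -> T -> R) (E : set T) : Prop :=
  smallest (sigma_algebra setT) (mopen d) E.

(* diameter, in the extended reals; diam of the empty set is 0 *)
Definition mdiam (T : Type) (d : T -> T -> R) (A : set T) : \bar R :=
  ereal_sup ([set 0%E] `|` [set (d x y)%:E | x in A & y in A]).

(* contribution diam(C)^s of a covering set, with the convention that the
   empty set contributes 0 (so that H^0 is counting measure) *)
Definition hcontrib (T : Type) (d : T -> T -> R) (s : nat) (C : set T) : \bar R :=
  if asbool (C = set0) then 0%E else expe (mdiam d C) s.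

(* H^s_delta (unnormalised) *)
Definition hausdorff_delta (T : Type) (d : T -> T -> R) (s : nat) (delta : R)
  (E : set T) : \bar R :=
  ereal_inf [set (\sum_(0 <= i <oo) hcontrib d s (C i))%E |
     C in [set C : nat -> set T |
            E `<=` \bigcup_i C i /\ forall i, (mdiam d (C i) <= delta%:E)%E]].

Definition hausdorff (T : Type) (d : T -> T -> R) (s : nat) (E : set T) : \bar R :=
  ereal_sup [set hausdorff_delta d s delta E | delta in [set delta : R | 0 < delta]].

Definition eucl_dist (n : nat) (a b : 'rV[R]_n) : R :=
  Num.sqrt (\sum_(i < n) (a ord0 i - b ord0 i) ^+ 2).

Definition linf_dist (m : nat) (a b : 'rV[R]_m) : R :=
  \big[Num.max/0]_(i < m) `|a ord0 i - b ord0 i|.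

Definition lipschitz_on (T U : Type) (dT : T -> T -> R) (dU : U -> U -> R)
  (A : set T) (f : T -> U) : Prop :=
  exists L : R, forall a b, A a -> A b -> dU (f a) (f b) <= L * dT a b.

Definition rectifiable (T : Type) (d : T -> T -> R) (n : nat) (E : set T) : Prop :=
  mborel d E /\
  exists (A : nat -> set 'rV[R]_n) (f : nat -> 'rV[R]_n -> T),
    (forall i, lipschitz_on (@eucl_dist n) d (A i) (f i)) /\
    hausdorff d n (E `\` \bigcup_i (f i @` A i)) = 0%E.

Definition purely_unrectifiable (T : Type) (d : T -> T -> R) (n : nat) : Prop :=
  forall E : set T, rectifiable d n E -> hausdorff d n E = 0%E.

End MetricDefs.

(* Main.v *)
Require Import Defs.
From HB Require Import structures.
From mathcomp Require Import all_boot all_order all_algebra.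
From mathcomp Require Import all_classical all_reals all_analysis.
From mathcomp Require Import lra.
Import Order.TTheory GRing.Theory Num.Theory.
Local Open Scope classical_set_scope.
Local Open Scope ring_scope.
Section Haus.
Variables (R : realType) (T U : Type) (dT : T -> T -> R) (dU : U -> U -> R).
Variable f : T -> U.
Hypothesis dT0 : forall x y, 0 <= dT x y.
Hypothesis fL : forall x y, dU (f x) (f y) <= dT x y.

Lemma mdiam_ge0 (V : Type) (dV : V -> V -> R) C : (0 <= mdiam dV C)%E.
Proof. by apply: ereal_sup_ubound; left. Qed.

Lemma mdiam_img C : (mdiam dU (f @` C) <= mdiam dT C)%E.
Proof.
apply: ge_ereal_sup => z [->|[a [x Cx <-] [b [y Cy <-] <-]]].
  exact: mdiam_ge0.
apply: le_trans (_ : (dT x y)%:E <= _)%E; first by rewrite lee_fin.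
by apply: ereal_sup_ubound; right; exists x => //; exists y.
Qed.

Lemma expe_le (a b : \bar R) k : (0 <= a)%E -> (a <= b)%E -> (a ^+ k <= b ^+ k)%E.
Proof.
move=> a0 ab; elim: k => [|k IH]; first by rewrite !expe0.
rewrite !expeS; apply: lee_pmul => //; exact: expe_ge0.
Qed.

Lemma hcontrib_ge0 (V : Type) (dV : V -> V -> R) s C : (0 <= hcontrib dV s C)%E.
Proof. rewrite /hcontrib; case: ifP => // _; exact/expe_ge0/mdiam_ge0. Qed.

Lemma hcontrib_img s C : (hcontrib dU s (f @` C) <= hcontrib dT s C)%E.
Proof.
rewrite /hcontrib; case: ifPn => [_|/asboolPn h]; first exact: hcontrib_ge0.
case: ifPn => [/asboolP h2|_].
  by exfalso; apply: h; rewrite h2 image_set0.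
apply: expe_le; [exact: mdiam_ge0|exact: mdiam_img].
Qed.

Lemma hdelta_img s delta E :
  (hausdorff_delta dU s delta (f @` E) <= hausdorff_delta dT s delta E)%E.
Proof.
apply/ereal_infP => _ [C [EC Cd] <-].
apply: le_trans (_ : (\sum_(0 <= i <oo) hcontrib dU s (f @` C i) <= _)%E).
  apply: ereal_inf_lbound; exists (fun i => f @` C i) => //; split.
    move=> _ [x Ex <-]; have [i _ Cix] := EC x Ex; exists i => //; exists x.
  by move=> i; apply: le_trans (Cd i); apply: mdiam_img.
apply: lee_nneseries => [i _ _|i _]; first exact: hcontrib_ge0.
exact: hcontrib_img.
Qed.

Lemma haus_img s E : (hausdorff dU s (f @` E) <= hausdorff dT s E)%E.
Proof.
apply: ge_ereal_sup => _ [delta d0 <-].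
apply: le_trans (hdelta_img _ _ _) _.
by apply: ereal_sup_ubound; exists delta.
Qed.
End Haus.

Lemma linf_le (R : realType) m (a b : 'rV[R]_m) (M : R) : 0 <= M ->
  (forall k, `|a ord0 k - b ord0 k| <= M) -> linf_dist a b <= M.
Proof.
move=> M0 h; rewrite /linf_dist.
by apply/Order.TotalTheory.bigmax_leP; split => // k _; apply: h.
Qed.

Lemma linf_ge (R : realType) m (a b : 'rV[R]_m) k :
  `|a ord0 k - b ord0 k| <= linf_dist a b.
Proof. rewrite /linf_dist; exact: (@Order.TotalTheory.le_bigmax _ _ (ordinal m) 0 (fun k => `|a ord0 k - b ord0 k|)). Qed.

Theorem theorem1p6 (R : realType) (X : Type) (d : X -> X -> R) (n : nat) :
  is_metric d -> mcompact d -> purely_unrectifiable d n ->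
  (hausdorff d n setT < +oo)%E ->
  forall eps : R, 0 < eps ->
  exists (m : nat) (sigma : X -> 'rV[R]_m),
    (forall x y, linf_dist (sigma x) (sigma y)
                 <= (2 * Num.sqrt (n%:R) + 1) * d x y) /\
    (hausdorff (@linf_dist R m) n (sigma @` setT) < +oo)%E /\
    (forall x y, `| d x y - linf_dist (sigma x) (sigma y) | < eps).
Proof.
move=> [d0 dxx dsym dtri] Hc _ Hfin eps e0.
have rtri : forall x y z, `|d x z - d y z| <= d x y.
  move=> x y z; rewrite ler_norml; apply/andP; split.
    have := dtri y x z; rewrite (dsym y x); lra.
  have := dtri x y z; lra.
have key : forall m (sigma : X -> 'rV[R]_m),
    (forall x y, linf_dist (sigma x) (sigma y) <= d x y) ->
    (forall x y, `| d x y - linf_dist (sigma x) (sigma y) | < eps) ->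
  exists (m : nat) (sigma : X -> 'rV[R]_m),
    (forall x y, linf_dist (sigma x) (sigma y)
                 <= (2 * Num.sqrt (n%:R) + 1) * d x y) /\
    (hausdorff (@linf_dist R m) n (sigma @` setT) < +oo)%E /\
    (forall x y, `| d x y - linf_dist (sigma x) (sigma y) | < eps).
  move=> m sigma h1 h2; exists m, sigma; split; last split => //.
    move=> x y; apply: le_trans (h1 x y) _.
    have := d0 x y; have := sqrtr_ge0 (n%:R : R); nra.
  by apply: le_lt_trans Hfin; apply: haus_img.
have [[x0 _]|X0] := pselect (exists x : X, True); last first.
  apply: (key 0 (fun _ => 0)) => x; by exfalso; apply: X0; exists x.
have [F finF cov] : exists2 F : set X, finite_set F &
    setT `<=` \bigcup_(i in F) mball d i (eps / 2).
  apply: Hc.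
- move=> x y; rewrite /mball /= => hxy.
  exists (eps / 2 - d x y); first by rewrite subr_gt0.
  move=> z; rewrite /mball /= => hz; have := dtri x y z; lra.
- move=> x _; exists x => //; rewrite /mball /= (proj2 (dxx x x) erefl); lra.
have F0 : F != set0.
  apply/eqP => F0; have [i Fi _] := cov x0 I; by rewrite F0 in Fi.
have [k Fk] := finF.
have [g [_ _]] := finite_set_bij F0 Fk (@subset_refl _ F).
pose sigma (x : X) : 'rV[R]_k := \row_(j < k) d x (g j).
apply: (key k sigma).
  move=> x y; apply: linf_le => // j; rewrite !mxE; exact: rtri.
move=> x y.
have [i Fi xi] := cov x I; rewrite /mball /= in xi.
have [j jk gj] := @surj _ _ _ _ g i Fi.
have Lle : linf_dist (sigma x) (sigma y) <= d x y.
  apply: linf_le => // j'; rewrite !mxE; exact: rtri.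
have Lge := @linf_ge R k (sigma x) (sigma y) (Ordinal jk).
rewrite !mxE /= gj in Lge.
rewrite ger0_norm ?subr_ge0 //.
have := dtri x i y; rewrite (dsym x i).
move: Lge; rewrite ler_norml => /andP[? _]; have := dsym x i; have := dsym y i; lra.
Qed.
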